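(* Let $S>0$, let $D$ be a finite multiset of items with sizes in $(0,S]$, let $k\ge1$ be an integer and $0<\epsilon\le 1/2$. Call an item large if its size exceeds $\epsilon S$ and small otherwise. Suppose the $k$ copies of all large items are packed into $L$ bins forming a valid partial $k$-times bin packing (each bin of total size at most $S$, no bin containing two copies of the same item). Suppose the $k$ copies of the small items are then inserted one at a time, each into some existing bin in which it fits and which contains no copy of the same item, a new bin being opened only when no such bin exists. Then the total number of bins used is at most $\max\{L,(1+2\epsilon)\,OPT(D_k)+k\}$.
   Context: $D_k$ is the collection of $k$ copies of each item of $D$. A $k$-times bin packing of $D$ assigns all copies in $D_k$ to bins such that each bin has total size at most $S$ and no bin contains two copies of the same item; $OPT(D_k)$ is the minimum number of bins in such a packing. *)

(* Defs.v *)
From HB Require Import structures.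
From mathcomp Require Import all_boot all_order all_algebra.
Set Implicit Arguments. Unset Strict Implicit. Unset Printing Implicit Defensive.
Import Order.TTheory GRing.Theory Num.Theory.
Local Open Scope ring_scope.

(* Items of D are indexed by 'I_n with sizes s : 'I_n -> R.
   Since no bin may contain two copies of the same item, a bin is
   represented by the set of items it contains; a (partial) packing is a
   sequence of bins. *)

Section Defs.
Variables (R : realFieldType) (n : nat) (s : 'I_n -> R).

Definition load (b : {set 'I_n}) : R := \sum_(i in b) s i.

Definition copies (P : seq {set 'I_n}) (i : 'I_n) : nat :=
  count (fun b : {set 'I_n} => i \in b) P.

Definition kpacking (S : R) (k : nat) (P : seq {set 'I_n}) : bool :=
  all (fun b : {set 'I_n} => load b <= S) P && [forall i, copies P i == k].

Definition kfeasible (S : R) (k m : nat) : bool :=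
  [exists t : m.-tuple {set 'I_n}, kpacking S k t].

(* OPT(D_k): the minimum number of bins of a k-times packing.  When all
   sizes are <= S, n*k bins (singletons) always suffice, so the minimum is
   attained within 0..n*k. *)
Definition OPTk (S : R) (k : nat) : nat :=
  \big[minn/(n * k)%N]_(m < (n * k).+1 | kfeasible S k m) m.

Definition insert_step (S : R) (B : seq {set 'I_n}) (i : 'I_n)
    (B' : seq {set 'I_n}) : Prop :=
  (exists2 j : nat, (j < size B)%N &
     [/\ i \notin nth set0 B j, load (nth set0 B j) + s i <= S &
         B' = set_nth set0 B j (i |: nth set0 B j)])
  \/
  ((forall j : nat, (j < size B)%N ->
      (i \in nth set0 B j) \/ S < load (nth set0 B j) + s i)
   /\ B' = rcons B [set i]).

Inductive insert_run (S : R) : seq {set 'I_n} -> seq 'I_n -> seq {set 'I_n} -> Prop :=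
| run_nil B : insert_run S B [::] B
| run_cons B i B1 ord B2 :
    insert_step S B i B1 -> insert_run S B1 ord B2 -> insert_run S B (i :: ord) B2.

End Defs.

(* Main.v *)
Require Import Defs.
From HB Require Import structures.
From mathcomp Require Import all_boot all_order all_algebra.
From mathcomp Require Import zify ring lra.
Import Order.TTheory GRing.Theory Num.Theory.
Local Open Scope ring_scope.

Lemma count_set_nth (T : Type) (x0 : T) (p : pred T) (B : seq T) (j : nat) (y : T) :
  (j < size B)%N -> (count p (set_nth x0 B j y) + p (nth x0 B j) = count p B + p y)%N.
Proof.
elim: B j => [|b B IH] [|j] //= Hj.
  lia.
by rewrite -addnA IH // addnA.
Qed.

Lemma copies_set_nth (n : nat) (B : seq {set 'I_n}) (j : nat) (i x : 'I_n) :
  (j < size B)%N -> i \notin nth set0 B j ->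
  copies (set_nth set0 B j (i |: nth set0 B j)) x = (copies B x + (x == i))%N.
Proof.
move=> Hj Hi.
have := @count_set_nth _ set0 (fun b : {set 'I_n} => x \in b) B j (i |: nth set0 B j) Hj.
rewrite /copies /= in_setU1.
case: eqP => [->|_]; rewrite ?(negbTE Hi) /=.
  by rewrite addn0 => ->.
by rewrite addn0 => /addIn.
Qed.

Lemma copies_rcons (n : nat) (B : seq {set 'I_n}) (i x : 'I_n) :
  copies (rcons B [set i]) x = (copies B x + (x == i))%N.
Proof. by rewrite /copies -cats1 count_cat /= in_set1 addn0. Qed.

Lemma sum_load (R : realFieldType) (n : nat) (s : 'I_n -> R) (P : seq {set 'I_n}) :
  \sum_(b <- P) load s b = \sum_(i < n) (copies P i)%:R * s i.
Proof.
elim: P => [|b P IH].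
  by rewrite big_nil; apply/esym/big1 => i _; rewrite mul0r.
rewrite big_cons IH.
have -> : load s b = \sum_(i < n) (i \in b)%:R * s i.
  rewrite /load big_mkcond; apply: eq_bigr => i _.
  by case: (i \in b); rewrite ?mul1r ?mul0r.
rewrite -big_split /=; apply: eq_bigr => i _.
by rewrite /copies /= natrD mulrDl.
Qed.

Lemma sum_load_le (R : realFieldType) (n : nat) (s : 'I_n -> R) (S : R) (P : seq {set 'I_n}) :
  all (fun b : {set 'I_n} => load s b <= S) P ->
  \sum_(b <- P) load s b <= (size P)%:R * S.
Proof.
elim: P => [|b P IH] /=; first by rewrite big_nil mul0r.
move=> /andP[Hb HP]; rewrite big_cons -addn1 natrD mulrDl mul1r addrC.
by apply: lerD => //; apply: IH.
Qed.

Lemma OPT_lb (R : realFieldType) (n : nat) (s : 'I_n -> R) (S : R) (k : nat) :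
  (forall i, 0 < s i <= S) ->
  k%:R * (\sum_(i < n) s i) <= (OPTk s S k)%:R * S.
Proof.
move=> Hs; rewrite /OPTk.
apply: (big_ind (fun m : nat => k%:R * (\sum_(i < n) s i) <= m%:R * S)).
- have : \sum_(i < n) s i <= \sum_(i < n) S.
    by apply: ler_sum => i _; case/andP: (Hs i).
  rewrite sumr_const card_ord => H.
  rewrite -mulr_natr in H; rewrite natrM.
  have k0 : 0 <= k%:R :> R by [].
  nra.
- by move=> x y Hx Hy; rewrite /minn; case: ltnP.
- move=> [m Hm] /= /existsP [t /andP [Hall /forallP Hc]].
  have := @sum_load_le _ _ s S t Hall; rewrite size_tuple sum_load.
  suff -> : \sum_(i < n) (copies t i)%:R * s i = k%:R * \sum_(i < n) s i by [].
  by rewrite mulr_sumr; apply: eq_bigr => i _; rewrite (eqP (Hc i)).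
Qed.

Lemma cnt_bound (R : realFieldType) (n : nat) (s : 'I_n -> R) (S : R)
   (B : seq {set 'I_n}) (i : 'I_n) :
  (forall j, 0 < s j) ->
  (forall b, b \in B -> i \in b \/ S < load s b + s i) ->
  (count (fun b : {set 'I_n} => i \notin b) B)%:R * (S - s i) <= \sum_(b <- B) load s b.
Proof.
move=> Hs; elim: B => [|b B IH] HB /=; first by rewrite big_nil mul0r.
have IH' := IH (fun b' hb' => HB b' ltac:(by rewrite inE hb' orbT)).
have L0 : 0 <= load s b by apply: sumr_ge0 => j _; apply: ltW.
rewrite big_cons natrD mulrDl.
case Hib: (i \in b) => /=.
  by rewrite mul0r add0r -(add0r (_ * _)); apply: lerD.
case: (HB b (mem_head b B)) => Hb; first by rewrite Hb in Hib.
rewrite mul1r; apply: lerD => //; rewrite lerBlDr; exact: ltW.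
Qed.

Lemma key (R : realFieldType) (n : nat) (s : 'I_n -> R) (S : R) (k : nat) (eps : R)
   (B : seq {set 'I_n}) (i : 'I_n) :
  0 < S -> (forall j, 0 < s j <= S) -> 0 < eps <= 2^-1 ->
  (forall b, b \in B -> i \in b \/ S < load s b + s i) ->
  (copies B i + 1 <= k)%N -> (forall j, copies B j <= k)%N -> s i <= eps * S ->
  (size B).+1%:R <= (1 + 2 * eps) * (OPTk s S k)%:R + k%:R.
Proof.
move=> S0 Hs /andP[e0 e1] HB Hi Hk Hsi.
set c := count (fun b : {set 'I_n} => i \notin b) B.
have Hsz : size B = (copies B i + c)%N.
  by rewrite -(count_predC (fun b : {set 'I_n} => i \in b) B).
have Hc := @cnt_bound _ _ s S B i (fun j => proj1 (andP (Hs j))) HB.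
have Hl : \sum_(b <- B) load s b <= k%:R * \sum_(j < n) s j.
  rewrite sum_load mulr_sumr; apply: ler_sum => j _.
  apply: ler_wpM2r; first by apply: ltW; case/andP: (Hs j).
  by rewrite ler_nat.
have HO := @OPT_lb _ _ s S k Hs.
set O := (OPTk s S k)%:R in HO *.
set tot := \sum_(j < n) s j in Hl HO.
have c0 : 0 <= c%:R :> R by [].
have H1 : c%:R * (1 - eps) * S <= O * S.
  have : c%:R * (1 - eps) * S <= c%:R * (S - s i) by nra.
  move=> h; apply: (le_trans h); apply: (le_trans Hc); apply: (le_trans Hl); exact: HO.
have H2 : c%:R * (1 - eps) <= O by rewrite -(ler_pM2r S0).
have e1' : eps * 2 <= 1.
  by rewrite -(ler_pM2r (ltr0n R 2)) in e1; rewrite mulVf ?pnatr_eq0 // in e1.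
have H3 : c%:R <= (1 + 2 * eps) * O.
  have h4 : 0 <= eps * (1 - 2 * eps) * c%:R.
    by apply: mulr_ge0 => //; apply: mulr_ge0; [exact: ltW| lra].
  have h5 : 0 <= (1 + 2 * eps) * (O - c%:R * (1 - eps)).
    by apply: mulr_ge0; [lra | rewrite subr_ge0].
  nra.
have Hn : ((size B).+1 <= k + c)%N by rewrite Hsz; lia.
apply: (le_trans (y := (k + c)%N%:R)); first by rewrite ler_nat.
rewrite natrD addrC; exact: lerD.
Qed.

Lemma run_bound (R : realFieldType) (n : nat) (s : 'I_n -> R) (S : R) (k : nat) (eps : R)
   (B1 : seq {set 'I_n}) (ord : seq 'I_n) (B2 : seq {set 'I_n}) :
  0 < S -> (forall j, 0 < s j <= S) -> 0 < eps <= 2^-1 ->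
  insert_run s S B1 ord B2 ->
  (forall j, copies B1 j + count_mem j ord <= k)%N ->
  (forall j, j \in ord -> s j <= eps * S) ->
  (size B2)%:R <= Num.max (size B1)%:R ((1 + 2 * eps) * (OPTk s S k)%:R + k%:R).
Proof.
move=> S0 Hs He Hrun; elim: Hrun => {B1 ord B2} [B|B i B1 ord B2 Hstep Hrun IH] Hc Hsm.
  by rewrite le_max lexx.
have Hcop : forall x, copies B1 x = (copies B x + (x == i))%N.
  case: Hstep => [[j Hj [Hni _ ->]]|[_ ->]] x.
    exact: copies_set_nth.
  exact: copies_rcons.
have Hc' : forall j, (copies B1 j + count_mem j ord <= k)%N.
  by move=> j; move: (Hc j); rewrite Hcop /= eq_sym; lia.
have Hsm' : forall j, j \in ord -> s j <= eps * S.
  by move=> j h; apply: Hsm; rewrite inE h orbT.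
have IH' := IH Hc' Hsm'.
case: Hstep IH' => [[j Hj [Hni _ ->]]|[Hall ->]] IH'.
  by rewrite size_set_nth (maxn_idPr Hj) in IH'.
rewrite size_rcons in IH'.
have HK : (size B).+1%:R <= (1 + 2 * eps) * (OPTk s S k)%:R + k%:R.
  apply: key => //.
  - move=> b hb; have := Hall (index b B); rewrite index_mem nth_index //.
    by move=> h; apply: h.
  - by move: (Hc i); rewrite /= eqxx; lia.
  - by move=> j; move: (Hc j); lia.
  - by apply: Hsm; exact: mem_head.
apply: (le_trans IH'); rewrite ge_max; apply/andP; split; rewrite le_max.
  by rewrite HK orbT.
by rewrite lexx orbT.
Qed.

Theorem lemma4 (R : realFieldType) (S : R) (n : nat) (s : 'I_n -> R)
    (k : nat) (eps : R)
    (B0 : seq {set 'I_n}) (ord : seq 'I_n) (B : seq {set 'I_n}) :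
  0 < S ->
  (forall i, 0 < s i <= S) ->
  (0 < k)%N ->
  0 < eps <= 2^-1 ->
  (* B0: valid partial k-times packing of exactly the large items *)
  all (fun b : {set 'I_n} => load s b <= S) B0 ->
  (forall i, copies B0 i = (if eps * S < s i then k else 0%N)) ->
  (* ord: insertion order of the k copies of each small item *)
  (forall i, count_mem i ord = (if eps * S < s i then 0%N else k)) ->
  insert_run s S B0 ord B ->
  (size B)%:R <= Num.max (size B0)%:R
                         ((1 + 2 * eps) * (OPTk s S k)%:R + k%:R).
Proof.
move=> S0 Hs k0 He _ H6 H7 Hrun.
apply: (@run_bound _ _ s S k eps B0 ord B S0 Hs He Hrun).
  by move=> j; rewrite H6 H7; case: ifP; lia.
move=> j Hj; rewrite leNgt; apply/negP => Hl.
by move: (H7 j); rewrite Hl; move/count_memPn; rewrite Hj.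
Qed.
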